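(* Let $K$ be a finite simplicial complex with a hereditary ordering $\succ$. If $\sigma\in M(K)$, then $\mu(\lambda(\sigma))=\sigma$ and $\lambda(\sigma)\notin M(K)$.
   Context: A finite simplicial complex $K$ is a family of subsets of a finite vertex set containing $\emptyset$ and closed under subsets; $\dim\sigma=|\sigma|-1$; a facet is a face of codimension one. Given a strict total ordering $\succ$ of $K$, for non-empty $\sigma$ let $\mu(\sigma)$ be the $\succ$-largest facet of $\sigma$. $\succ$ is hereditary if $\sigma\succ\tau$ whenever $\dim\sigma>\dim\tau$, and $\sigma\succ\tau$ whenever $\mu(\sigma)\succ\mu(\tau)$. $M(K)$ is the set of simplices $\sigma\in K$ such that $\sigma=\mu(\eta)$ for some $\eta\in K$. For a simplex $\sigma\in K$ of dimension $k$ that is not maximal with respect to inclusion, $\lambda(\sigma)$ denotes the $\succ$-smallest $(k+1)$-dimensional simplex of $K$ containing $\sigma$ (elements of $M(K)$ are not maximal, so $\lambda$ is defined on them). *)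

(* Defs.v *)
From mathcomp Require Import all_boot.
Set Implicit Arguments. Unset Strict Implicit. Unset Printing Implicit Defensive.

Definition simplicial_complex (T : finType) (K : {set {set T}}) : Prop :=
  set0 \in K /\ forall s t : {set T}, s \in K -> t \subset s -> t \in K.

(* [succ s t] reads "s ≻ t".  It is a strict total ordering of K. *)
Definition strict_total_order_on (T : finType) (K : {set {set T}})
    (succ : rel {set T}) : Prop :=
  [/\ {in K, forall s, ~~ succ s s},
      {in K & K, forall s t, forall u, u \in K -> succ s t -> succ t u -> succ s u}
    & {in K & K, forall s t, s != t -> succ s t || succ t s}].

Definition facet (T : finType) (t s : {set T}) : bool :=
  (t \subset s) && (#|t|.+1 == #|s|).

(* mu s : the succ-largest facet of s (meaningful for non-empty s in K;
   the faces of s all lie in K). *)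
Definition mu (T : finType) (succ : rel {set T}) (s : {set T}) : {set T} :=
  odflt set0 [pick t | facet t s &&
                [forall t', facet t' s ==> (t' == t) || succ t t']].

Definition hereditary (T : finType) (K : {set {set T}}) (succ : rel {set T}) : Prop :=
  (forall s t, s \in K -> t \in K -> #|s| > #|t| -> succ s t) /\
  (forall s t, s \in K -> t \in K -> s != set0 -> t != set0 ->
     succ (mu succ s) (mu succ t) -> succ s t).

Definition Mset (T : finType) (K : {set {set T}}) (succ : rel {set T}) : {set {set T}} :=
  [set s in K | [exists e in K, (e != set0) && (mu succ e == s)]].

(* lambda s : the succ-smallest simplex of K of dimension dim s + 1 containing s
   (meaningful when s is not maximal). *)
Definition lam (T : finType) (K : {set {set T}}) (succ : rel {set T}) (s : {set T})
    : {set T} :=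
  odflt s [pick e in K | facet s e &&
             [forall e' in K, facet s e' ==> (e' == e) || succ e' e]].

(* Main.v *)
Require Import Defs.
From mathcomp Require Import all_boot.

Section Aux.
Variables (T : finType) (K : {set {set T}}) (r : rel {set T}).
Hypothesis Htr : forall a b c, a \in K -> b \in K -> c \in K -> r a b -> r b c -> r a c.
Hypothesis Htot : forall a b, a \in K -> b \in K -> a != b -> r a b || r b a.

Lemma ex_max (l : seq {set T}) : l != [::] -> all (fun x => x \in K) l ->
  exists2 m, m \in l & forall a, a \in l -> (a == m) || r m a.
Proof.
elim: l => [//|x l IH] _ /andP[HxK Hall].
have Hall' : {in l, forall z, z \in K} by apply/allP.
case: l IH Hall Hall' => [|y l'] IH Hall Hall'.
  by exists x; rewrite ?inE // => a; rewrite inE => ->.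
have [m Hm Hmax] := IH isT Hall.
have HmK : m \in K by exact: Hall'.
case: (eqVneq x m) => [Exm|Nxm].
  exists m; first by rewrite inE Hm orbT.
  move=> a; rewrite in_cons => /orP[/eqP ->|Ha]; first by rewrite Exm eqxx.
  exact: Hmax.
case/orP: (Htot x m HxK HmK Nxm) => Hr.
  exists x; first by rewrite inE eqxx.
  move=> a; rewrite in_cons => /orP[->//|Ha].
  have HaK : a \in K by exact: Hall'.
  case/orP: (Hmax a Ha) => [/eqP ->|Hma]; first by rewrite Hr orbT.
  by rewrite (Htr x m a HxK HmK HaK Hr Hma) orbT.
exists m; first by rewrite inE Hm orbT.
move=> a; rewrite in_cons => /orP[/eqP ->|Ha]; first by rewrite Hr orbT.
exact: Hmax.
Qed.
End Aux.

Lemma facet_ex (T : finType) (s : {set T}) : s != set0 -> exists t, facet t s.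
Proof.
case/set0Pn => x Hx; exists (s :\ x).
rewrite /facet subD1set (cardsD1 x s) Hx /=. by [].
Qed.

Lemma mu_spec (T : finType) (K : {set {set T}}) (succ : rel {set T}) :
  simplicial_complex K -> strict_total_order_on K succ ->
  forall s, s \in K -> s != set0 ->
  facet (mu succ s) s /\ forall t, facet t s -> (t == mu succ s) || succ (mu succ s) t.
Proof.
move=> [HK0 Hsub] [Hirr Htr Htot] s HsK Hne.
rewrite /mu; case: pickP => [t /andP[Hf /forallP Hall] | Hnone].
  by split => // t' Ht'; exact: (implyP (Hall t') Ht').
exfalso.
have H1 : enum [set t | facet t s] != [::].
  have [t Ht] := @facet_ex _ s Hne.
  apply/eqP => E; have : t \in enum [set t | facet t s] by rewrite mem_enum inE.
  by rewrite E.
have H2 : all (fun x => x \in K) (enum [set t | facet t s]).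
  apply/allP => t; rewrite mem_enum inE => /andP[Hts _]; exact: Hsub Hts.
have [m Hm Hmax] := @ex_max T K succ
   (fun a b c Ha Hb Hc => Htr a b Ha Hb c Hc)
   (fun a b Ha Hb => Htot a b Ha Hb) _ H1 H2.
move: Hm; rewrite mem_enum inE => Hfm.
have := Hnone m; rewrite Hfm /=; move/negP; apply; apply/forallP => t'.
apply/implyP => Ht'; apply: Hmax; by rewrite mem_enum inE.
Qed.

Lemma lam_spec (T : finType) (K : {set {set T}}) (succ : rel {set T}) :
  simplicial_complex K -> strict_total_order_on K succ ->
  forall s e, e \in K -> facet s e ->
  [/\ lam K succ s \in K, facet s (lam K succ s) &
    forall e', e' \in K -> facet s e' -> (e' == lam K succ s) || succ e' (lam K succ s)].
Proof.
move=> [HK0 Hsub] [Hirr Htr Htot] s e HeK Hfe.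
rewrite /lam; case: pickP => [t /andP[HtK /andP[Hf /forallP Hall]] | Hnone].
  split => // e' He' Hf'; exact: (implyP (implyP (Hall e') He') Hf').
exfalso.
have H1 : enum [set t in K | facet s t] != [::].
  apply/eqP => E; have : e \in enum [set t in K | facet s t] by rewrite mem_enum inE HeK.
  by rewrite E.
have H2 : all (fun x => x \in K) (enum [set t in K | facet s t]).
  by apply/allP => t; rewrite mem_enum inE => /andP[].
have Htr' : forall a b c, a \in K -> b \in K -> c \in K -> succ b a -> succ c b -> succ c a.
  by move=> a b c Ha Hb Hc h1 h2; exact: (Htr c b Hc Hb a Ha h2 h1).
have Htot' : forall a b, a \in K -> b \in K -> a != b -> succ b a || succ a b.
  by move=> a b Ha Hb Hab; apply: Htot => //; rewrite eq_sym.
have [m Hm Hmax] := @ex_max T K (fun a b => succ b a) Htr' Htot' _ H1 H2.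
move: Hm; rewrite mem_enum inE => /andP[HmK Hfm].
have := Hnone m; rewrite HmK Hfm /=; move/negP; apply; apply/forallP => t'.
apply/implyP => Ht'K; apply/implyP => Ht'; apply: Hmax; by rewrite mem_enum inE Ht'K.
Qed.

Theorem lemma5 (T : finType) (K : {set {set T}}) (succ : rel {set T}) :
  simplicial_complex K ->
  strict_total_order_on K succ ->
  hereditary K succ ->
  forall s : {set T}, s \in Mset K succ ->
    mu succ (lam K succ s) = s /\ lam K succ s \notin Mset K succ.
Proof.
move=> HK Hord [Hdim Hher] s.
have [HK0 Hsub] := HK; have [Hirr Htr Htot] := Hord.
rewrite inE => /andP[HsK /existsP[e /and3P[HeK Hne /eqP Hmue]]].
have [Hfe Hmaxe] := @mu_spec _ _ _ HK Hord _ HeK Hne. rewrite Hmue in Hfe Hmaxe.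
have [HlK Hfl Hminl] := @lam_spec _ _ _ HK Hord _ _ HeK Hfe.
set l := lam K succ s in HlK Hfl Hminl *.
have Hlne : l != set0.
  by rewrite -card_gt0; case/andP: Hfl => _ /eqP <-.
have [Hfm Hmaxm] := @mu_spec _ _ _ HK Hord _ HlK Hlne.
have Hmu : mu succ l = s.
  apply/eqP; apply/negPn/negP => Hneq.
  move: (Hmaxm s Hfl); rewrite eq_sym (negbTE Hneq) /= => Hts.
  move: (Hminl e HeK Hfe); case: eqP => [He | _] /= Hel.
    by rewrite -He Hmue eqxx in Hneq.
  have Hle : succ l e by apply: Hher => //; rewrite Hmue.
  by move: (Htr l e HlK HeK l HlK Hle Hel); rewrite (negbTE (Hirr l HlK)).
split => //.
apply/negP; rewrite inE => /andP[_ /existsP[h /and3P[HhK Hhne /eqP Hmuh]]].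
have [Hfh Hmaxh] := @mu_spec _ _ _ HK Hord _ HhK Hhne. rewrite Hmuh in Hfh Hmaxh.
case/andP: Hfh => Hlh /eqP Hch.
case/andP: Hfl => Hsl /eqP Hcl.
have : h :\: l != set0.
  apply/negP; rewrite setD_eq0 => Hhl.
  by move: (subset_leq_card Hhl); rewrite -Hch ltnn.
case/set0Pn => x; rewrite inE => /andP[Hxl Hxh].
have Hxs : x \notin s by apply: contra Hxl; apply: (subsetP Hsl).
set l' := x |: s.
have Hl'h : l' \subset h.
  by rewrite subUset sub1set Hxh (subset_trans Hsl Hlh).
have Hl'K : l' \in K := Hsub h l' HhK Hl'h.
have Hcl' : #|l'| = #|s|.+1 by rewrite cardsU1 Hxs.
have Hfsl' : facet s l' by rewrite /facet subsetUr Hcl' /= eqxx.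
have Hfl'h : facet l' h by rewrite /facet Hl'h Hcl' -Hch -Hcl /= eqxx.
have Hne' : l' != l.
  by apply/eqP => E; move: Hxl; rewrite -E setU11.
move: (Hminl l' Hl'K Hfsl'); rewrite (negbTE Hne') /= => H1.
move: (Hmaxh l' Hfl'h); rewrite (negbTE Hne') /= => H2.
by move: (Htr l l' HlK Hl'K l HlK H2 H1); rewrite (negbTE (Hirr l HlK)).
Qed.
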